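(* $\rhd_{R_{\diamond}}\,=\,\rhd_{\diamond}$ with $R_{\diamond}\,=\,\Bigl\{ \frac{p\, , \, q}{p\diamond q}\,,\, \frac{p\diamond q}{p\, , \, q}\Bigr\}$.
   Context: $\rhd_\diamond$ is the multiple-conclusion (Scottian) logic of the two-valued Nmatrix $\langle\{0,1\},\cdot,\{1\}\rangle$ with one binary connective $\diamond$ (platypus) interpreted by $\diamond(0,0)=\{0\}$, $\diamond(1,1)=\{1\}$, $\diamond(0,1)=\diamond(1,0)=\{0,1\}$: $\Gamma\rhd_\diamond\Delta$ iff every valuation making all of $\Gamma$ equal to $1$ makes some member of $\Delta$ equal to $1$. For a set $R$ of multiple-conclusion rules $\frac{\Gamma}{\Delta}$ (premises read conjunctively, conclusions disjunctively), $\rhd_R$ is the closure of $R$ under overlap, dilution, cut and substitution invariance. *)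

(* Defs.v *)
From Stdlib Require Import List.
Import ListNotations.

Inductive form : Type :=
| Var : nat -> form
| Dia : form -> form -> form.

Definition fset := form -> Prop.

Definition fset_of_list (l : list form) : fset := fun phi => In phi l.

Definition subst := nat -> form.

Fixpoint apply_subst (s : subst) (phi : form) : form :=
  match phi with
  | Var n => s n
  | Dia a b => Dia (apply_subst s a) (apply_subst s b)
  end.

Definition subst_set (s : subst) (G : fset) : fset :=
  fun psi => exists phi, G phi /\ psi = apply_subst s phi.

Record rule := mkRule { prem : list form; concl : list form }.

(* The Scottian (multiple-conclusion) consequence relation |>_R generated by R:
   the least relation containing R that is closed under overlap, dilution,
   (generalized, Shoesmith-Smiley) cut and substitution invariance. *)
Inductive derivR (R : list rule) : fset -> fset -> Prop :=
| dR_rule : forall r, In r R ->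
    derivR R (fset_of_list (prem r)) (fset_of_list (concl r))
| dR_overlap : forall (G D : fset) phi, G phi -> D phi -> derivR R G D
| dR_dilution : forall (G D G' D' : fset),
    derivR R G D ->
    (forall phi, G phi -> G' phi) -> (forall phi, D phi -> D' phi) ->
    derivR R G' D'
| dR_cut : forall (G D Om : fset),
    (forall Om1 Om2 : fset,
        (forall phi, Om phi <-> (Om1 phi \/ Om2 phi)) ->
        (forall phi, ~ (Om1 phi /\ Om2 phi)) ->
        derivR R (fun phi => G phi \/ Om1 phi) (fun phi => D phi \/ Om2 phi)) ->
    derivR R G D
| dR_subst : forall (s : subst) (G D : fset),
    derivR R G D -> derivR R (subst_set s G) (subst_set s D).

(* The two-valued Nmatrix <{0,1}, ., {1}> with 0 = false, 1 = true:
   diamond(0,0) = {0}, diamond(1,1) = {1}, diamond(0,1) = diamond(1,0) = {0,1}.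
   [dia_interp x y z] means z is in diamond(x,y). *)
Definition dia_interp (x y z : bool) : Prop :=
  match x, y with
  | false, false => z = false
  | true, true => z = true
  | _, _ => True
  end.

Definition valuation (v : form -> bool) : Prop :=
  forall a b, dia_interp (v a) (v b) (v (Dia a b)).

Definition sem_dia (G D : fset) : Prop :=
  forall v, valuation v ->
    (forall phi, G phi -> v phi = true) ->
    exists psi, D psi /\ v psi = true.

Definition p_var := Var 0.
Definition q_var := Var 1.
Definition R_dia : list rule :=
  [ mkRule [p_var; q_var] [Dia p_var q_var];
    mkRule [Dia p_var q_var] [p_var; q_var] ].

(* Main.v *)
Require Import Defs.
From Stdlib Require Import List Classical ClassicalEpsilon.
Import ListNotations.

Lemma sound : forall G D, derivR R_dia G D -> sem_dia G D.
Proof.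
  intros G D H; induction H; intros v Hv HG.
  - simpl in H. destruct H as [<-|[<-|[]]]; simpl in *; unfold fset_of_list in *; simpl in *.
    + exists (Dia p_var q_var). split; [left; reflexivity|].
      pose proof (Hv p_var q_var) as Hd.
      rewrite (HG p_var (or_introl eq_refl)), (HG q_var (or_intror (or_introl eq_refl))) in Hd.
      exact Hd.
    + pose proof (Hv p_var q_var) as Hd.
      specialize (HG _ (or_introl eq_refl)).
      destruct (v p_var) eqn:E1.
      * exists p_var; split; auto.
      * destruct (v q_var) eqn:E2.
        -- exists q_var; split; auto.
        -- simpl in Hd. congruence.
  - exists phi. split; auto.
  - destruct (IHderivR v Hv (fun phi Hp => HG phi (H0 phi Hp))) as [psi [Hp Hq]].
    exists psi; auto.
  - destruct (H0 (fun phi => Om phi /\ v phi = true) (fun phi => Om phi /\ v phi = false))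
      with (v := v) as [psi [Hp Hq]]; auto.
    + intro phi; destruct (v phi); intuition congruence.
    + intros phi [[_ A] [_ B]]; congruence.
    + intros phi [A|[_ A]]; auto.
    + destruct Hp as [Hp|[_ Hp]]; [exists psi; auto| congruence].
  - destruct (IHderivR (fun phi => v (apply_subst s phi))) as [psi [Hp Hq]].
    + intros a b. apply (Hv (apply_subst s a) (apply_subst s b)).
    + intros phi Hp. apply HG. exists phi; auto.
    + exists (apply_subst s psi). split; auto. exists psi; auto.
Qed.

Definition sb (a b : form) : subst := fun n => match n with 0 => a | _ => b end.

Lemma inst : forall i a b (G D : fset), i < 2 ->
  (forall phi, In phi (prem (nth i R_dia (mkRule [] []))) -> G (apply_subst (sb a b) phi)) ->
  (forall phi, In phi (concl (nth i R_dia (mkRule [] []))) -> D (apply_subst (sb a b) phi)) ->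
  derivR R_dia G D.
Proof.
  intros i a b G D Hi HG HD.
  eapply dR_dilution.
  - apply (dR_subst _ (sb a b)). apply dR_rule. apply nth_In. exact Hi.
  - intros phi [x [Hx ->]]. apply HG; exact Hx.
  - intros phi [x [Hx ->]]. apply HD; exact Hx.
Qed.

Lemma complete : forall G D, sem_dia G D -> derivR R_dia G D.
Proof.
  intros G D Hs.
  apply dR_cut with (Om := fun _ => True).
  intros Om1 Om2 Hpart Hdisj.
  set (v := fun phi => if excluded_middle_informative (Om1 phi) then true else false).
  assert (Hv1 : forall phi, v phi = true <-> Om1 phi).
  { intro phi; unfold v; destruct (excluded_middle_informative (Om1 phi)); intuition congruence. }
  assert (Hv2 : forall phi, v phi = false -> Om2 phi).
  { intros phi E. destruct (proj1 (Hpart phi) I) as [A|A]; auto.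
    apply Hv1 in A; congruence. }
  destruct (classic (valuation v)) as [Hval|Hnv].
  - destruct (classic (forall phi, G phi -> v phi = true)) as [HG|HG].
    + destruct (Hs v Hval HG) as [psi [Hp Hq]].
      apply dR_overlap with psi; [right; apply Hv1; auto | left; auto].
    + apply not_all_ex_not in HG as [phi Hphi].
      apply imply_to_and in Hphi as [Hp Hq].
      apply dR_overlap with phi; [left; auto | right; apply Hv2; destruct (v phi); congruence].
  - apply not_all_ex_not in Hnv as [a Hnv].
    apply not_all_ex_not in Hnv as [b Hnv].
    unfold dia_interp in Hnv.
    destruct (v a) eqn:Ea, (v b) eqn:Eb; try (exfalso; apply Hnv; exact I).
    + apply (inst 0 a b); [auto|..]; simpl.
      * intros phi [<-|[<-|[]]]; right; apply Hv1; auto.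
      * intros phi [<-|[]]; right; apply Hv2; simpl; destruct (v (Dia a b)); congruence.
    + apply (inst 1 a b); [auto|..]; simpl.
      * intros phi [<-|[]]; right; apply Hv1; simpl; destruct (v (Dia a b)); congruence.
      * intros phi [<-|[<-|[]]]; right; apply Hv2; auto.
Qed.

Theorem theorem3 : forall G D : fset, derivR R_dia G D <-> sem_dia G D.
Proof. split; [apply sound | apply complete]. Qed.
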